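(* For every integer $k\geq 2$ and every bipartite graph $G$ containing at most one cycle, $\nu_{k}(G) \geq \frac{\nu_{k-1}(G) + \nu_{k+1}(G)}{2}$.
   Context: Graphs are finite, without loops, possibly with multiple edges. For $k\geq 1$, $\nu_k(G)$ is the maximum number of edges of a $k$-edge-colorable subgraph of $G$. *)

(* Defs.v *)
(* A finite loopless multigraph is given by a finite vertex
   type V, a finite edge type E and endpoint maps src tgt : E -> V with
   src e != tgt e for every edge (parallel edges allowed). *)
From mathcomp Require Import all_boot.
Set Implicit Arguments. Unset Strict Implicit. Unset Printing Implicit Defensive.

Section Multigraph.
Variables (V E : finType) (src tgt : E -> V).

Definition loopless := forall e : E, src e != tgt e.

Definition incident (v : V) (e : E) : bool := (src e == v) || (tgt e == v).

Definition share (e f : E) : bool :=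
  [|| src e == src f, src e == tgt f, tgt e == src f | tgt e == tgt f].

Definition bipartite := exists side : V -> bool, forall e, side (src e) != side (tgt e).

Definition deg_in (C : {set E}) (v : V) : nat := #|[set e in C | incident v e]|.

Definition eadj_in (C : {set E}) : rel E :=
  fun e f => [&& e \in C, f \in C & share e f].

(* C is (the edge set of) a cycle: nonempty, connected, every vertex of
   degree 0 or 2 in C.  (Two parallel edges form a cycle of length 2.) *)
Definition is_cycle (C : {set E}) : bool :=
  [&& C != set0,
      [forall v, (deg_in C v == 0) || (deg_in C v == 2)] &
      [forall e in C, forall f in C, connect (eadj_in C) e f]].

Definition at_most_one_cycle :=
  forall C D : {set E}, is_cycle C -> is_cycle D -> C = D.

Definition k_colorable (k : nat) (F : {set E}) : bool :=
  [exists col : {ffun E -> 'I_k},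
     [forall e in F, forall f in F, ((e != f) && share e f) ==> (col e != col f)]].

Definition nu (k : nat) : nat := \max_(F : {set E} | k_colorable k F) #|F|.

End Multigraph.

(* Main.v *)
Require Import Defs.
From mathcomp Require Import all_boot zify.
Set Implicit Arguments. Unset Strict Implicit. Unset Printing Implicit Defensive.

Lemma connect_inv (T:finType) (r : rel T) (P : pred T) x y :
  (forall a b, r a b -> P a -> P b) -> connect r x y -> P x -> P y.
Proof.
move=> H /connectP[p]; elim: p x => [|z p IH] x /=; first by move=> _ ->.
case/andP=> rxz pz ey Px; apply: (IH z pz ey); exact: H rxz Px.
Qed.

Lemma connect_pred (T:finType) (r : rel T) x y :
  connect r x y -> y != x -> exists z, connect r x z /\ r z y.
Proof.
case/connectP=> p; elim/last_ind: p => [|p z _] /=; first by move=> _ ->; rewrite eqxx.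
rewrite rcons_path last_rcons => /andP[pp rz] -> _; exists (last x p); split=> //.
by apply/connectP; exists p.
Qed.

Lemma card_inj_bound (T : finType) (A : {set T}) (g : T -> nat) m :
  {in A &, injective g} -> (forall x, x \in A -> g x < m) -> #|A| <= m.
Proof.
move=> inj lt. rewrite cardE -(size_map g) -[m](size_iota 0).
apply: uniq_leq_size.
  rewrite map_inj_in_uniq ?enum_uniq // => x y; rewrite !mem_enum; exact: inj.
move=> y /mapP[x]; rewrite mem_enum => xA ->. rewrite mem_iota /=. exact: lt.
Qed.

Section Basic.
Variables (V E : finType) (src tgt : E -> V).
Local Notation inc := (incident src tgt).
Local Notation deg := (deg_in src tgt).
Local Notation share := (share src tgt).

Lemma share_inc w e f : inc w e -> inc w f -> share e f.
Proof. by rewrite /incident /share => /orP[]/eqP-> /orP[]/eqP->; rewrite eqxx ?orbT. Qed.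

Lemma shareP e f : share e f -> exists w, inc w e /\ inc w f.
Proof.
rewrite /share /incident => /or4P[]/eqP h.
- by exists (src e); rewrite eqxx h eqxx.
- by exists (src e); rewrite eqxx h eqxx orbT.
- by exists (tgt e); rewrite eqxx orbT h eqxx.
- by exists (tgt e); rewrite eqxx orbT h eqxx orbT.
Qed.

Definition pcolor k (F : {set E}) (col : E -> 'I_k) :=
  forall e f, e \in F -> f \in F -> e != f -> share e f -> col e != col f.

Lemma colorableP k (F : {set E}) : k_colorable src tgt k F -> exists col : E -> 'I_k, pcolor F col.
Proof.
case/existsP=> col /forallP H; exists col => e f eF fF nef sh.
move: (H e); rewrite eF /= => /forallP/(_ f); rewrite fF /= nef sh /=; exact.
Qed.

Lemma pcolor_col k (F : {set E}) (col : E -> 'I_k) : pcolor F col -> k_colorable src tgt k F.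
Proof.
move=> H; apply/existsP; exists (finfun col); apply/forallP => e; apply/implyP => eF.
apply/forallP => f; apply/implyP => fF; apply/implyP => /andP[nef sh].
by rewrite !ffunE; apply: H.
Qed.

Lemma colorable_deg k (F : {set E}) : k_colorable src tgt k F -> forall v, deg F v <= k.
Proof.
case/colorableP=> col H v; rewrite /deg_in.
apply: (@card_inj_bound _ _ (fun e => val (col e))) => [e f|e _]; last exact: ltn_ord.
rewrite !inE => /andP[eF ev] /andP[fF fv] /val_inj ce.
apply/eqP; apply/negPn/negP => nef.
by move: (H e f eF fF nef (share_inc ev fv)); rewrite ce eqxx.
Qed.

Lemma deg_D1 (F : {set E}) e u : e \in F -> inc u e -> deg (F :\ e) u < deg F u.
Proof.
move=> eF ue; rewrite /deg_in (cardsD1 e [set f in F | inc u f]) inE eF ue /= add1n ltnS.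
apply: subset_leq_card; apply/subsetP => f; rewrite !inE.
by case/andP=> /andP[-> ->] ->.
Qed.

Lemma missing k (F : {set E}) (col : E -> 'I_k) u : deg F u < k ->
  exists a : 'I_k, forall f, f \in F -> inc u f -> col f != a.
Proof.
move=> dk; set S := [set f in F | inc u f].
case: (pickP [pred a | a \notin col @: S]) => [a /= Ha | none].
  exists a => f fF uf; apply: contraNneq Ha => <-; apply: imset_f; by rewrite inE fF.
have : [set: 'I_k] \subset col @: S.
  by apply/subsetP => a _; move: (none a) => /= /negbFE.
move/subset_leq_card; rewrite cardsT card_ord => h.
have := leq_trans h (leq_imset_card col S); rewrite /S -/(deg_in src tgt F u) => h2.
by move: (leq_ltn_trans h2 dk); rewrite ltnn.
Qed.

End Basic.

Lemma share_sym (V E : finType) (src tgt : E -> V) e f : share src tgt e f -> share src tgt f e.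
Proof. by case/shareP=> w [we wf]; apply: share_inc wf we. Qed.

Section Kempe.
Variables (V E : finType) (src tgt : E -> V) (side : V -> bool).
Hypothesis Hside : forall e, side (src e) != side (tgt e).
Local Notation inc := (incident src tgt).
Local Notation deg := (deg_in src tgt).
Local Notation share := (share src tgt).

Definition head (x : E * bool) := if x.2 then tgt x.1 else src x.1.
Definition tail (x : E * bool) := if x.2 then src x.1 else tgt x.1.

Lemma side_ht x : side (head x) = ~~ side (tail x).
Proof.
rewrite /head /tail; case: x.2; have := Hside x.1; case: (side (src _)); case: (side (tgt _)) => //.
Qed.

Lemma inc_dart w x : inc w x.1 -> w = head x \/ w = tail x.
Proof.
rewrite /incident /head /tail; case: x.2 => /orP[]/eqP->; auto.
Qed.

Lemma inc_head x : inc (head x) x.1.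
Proof. by rewrite /incident /head; case: x.2; rewrite eqxx ?orbT. Qed.
Lemma inc_tail x : inc (tail x) x.1.
Proof. by rewrite /incident /tail; case: x.2; rewrite eqxx ?orbT. Qed.

Lemma dart_tail w f : inc w f -> tail (f, src f == w) = w.
Proof.
rewrite /tail /incident /=; case: eqP => //= _ /eqP //.
Qed.

Lemma ab3 k (a b c1 c2 c3 : 'I_k) : a != b -> (c1==a)||(c1==b) -> (c2==a)||(c2==b) ->
  (c3==a)||(c3==b) -> c1 != c3 -> c2 != c3 -> c1 = c2.
Proof.
move=> ab; do 3 case/orP=> /eqP->; rewrite ?eqxx //.
Qed.

Lemma kempe k (F : {set E}) (col : E -> 'I_k) (a b : 'I_k) u v :
  pcolor src tgt F col -> a != b -> side u != side v ->
  (forall f, f \in F -> inc u f -> col f != a) ->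
  (forall f, f \in F -> inc v f -> col f != b) ->
  exists col' : E -> 'I_k, [/\ pcolor src tgt F col',
     (forall f, f \in F -> inc u f -> col' f != a) &
     (forall f, f \in F -> inc v f -> col' f != a)].
Proof.
move=> pr ab suv mu mv.
case: (pickP [pred f | [&& f \in F, inc v f & col f == a]]) => [e0 /= /and3P[e0F ve0 /eqP ce0] | none]; last first.
  exists col; split => // f fF vf; move: (none f) => /=; rewrite fF vf /=; exact: negbT.
pose s0 := (e0, src e0 == v).
have ts0 : tail s0 = v by apply: dart_tail.
pose inS f := (f \in F) && ((col f == a) || (col f == b)).
pose step := [rel x y : E * bool | [&& inS x.1, inS y.1, col y.1 != col x.1 & tail y == head x]].
pose W := [set f | connect step s0 (f,true) || connect step s0 (f,false)].
have inW x : connect step s0 x -> x.1 \in W.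
  by case: x => f [] h; rewrite inE h ?orbT.
have Wdart f : f \in W -> exists x, connect step s0 x /\ x.1 = f.
  by rewrite inE => /orP[h|h]; [exists (f,true)|exists (f,false)].
have RS x : connect step s0 x -> inS x.1.
  move=> h; apply: (connect_inv (P := fun y => inS y.1)) h _.
    by move=> ? ? /and4P[].
  by rewrite /inS e0F ce0 eqxx.
pose inv x := side (head x) (+) (col x.1 == a).
have Inv x : connect step s0 x -> inv x = side v.
  move=> h; apply/eqP; apply: (connect_inv (P := fun y => inv y == side v)) h _ => [y z|]; last first.
    by rewrite /inv side_ht ts0 /= ce0 eqxx; case: (side v).
  case/and4P=> /andP[_ hy] /andP[_ hz] nc /eqP tz /eqP <-; apply/eqP.
  rewrite /inv side_ht tz.
  move: hy hz nc; do 2 case/orP=> /eqP->; rewrite ?eqxx // ?(negbTE ab) 1?eq_sym ?(negbTE ab).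
  all: try by move=> _; case: (side _).
have Pred x : connect step s0 x -> x != s0 -> exists y, connect step s0 y /\ step y x.
  exact: connect_pred.
have noU x : connect step s0 x -> head x != u /\ tail x != u.
  move=> cx; have hd y : connect step s0 y -> head y != u.
    move=> cy; apply/eqP => hy; have := Inv y cy; rewrite /inv hy.
    have := RS y cy; case/andP => yF _; rewrite (negbTE (mu _ yF _)); last by rewrite -hy inc_head.
    by move=> h; move: suv; rewrite -h addbF eqxx.
  split; first exact: hd.
  apply/eqP => tx; have nx : x != s0.
    by apply/eqP => xs; move: suv; rewrite -tx xs ts0 eqxx.
  case: (Pred x cx nx) => y [cy /and4P[_ _ _ /eqP]]; rewrite tx => hy.
  by move: (hd y cy); rewrite -hy eqxx.
have WnoU f : f \in W -> ~~ inc u f.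
  case/Wdart=> x [cx <-]; apply/negP => /inc_dart [] h; have := noU x cx; rewrite -h eqxx; case=> //.
have Clos x g : connect step s0 x -> g \in F -> inS g -> col g != col x.1 -> share x.1 g -> g \in W.
  move=> cx gF Sg ng /shareP[w [wx wg]]; have Sx := RS x cx.
  case: (inc_dart wx) => hw.
    apply: (inW (g, src g == w)); apply: connect_trans cx (connect1 _) => /=.
    by rewrite Sx Sg /= ng dart_tail // hw eqxx.
  have [xs|nx] := eqVneq x s0.
    exfalso; move: hw; rewrite xs ts0 => hw; move: ng Sg; rewrite xs /= ce0 /inS gF /= => ng.
    rewrite (negbTE ng) /= => cg; move: (mv g gF); rewrite -hw wg => /(_ isT); by rewrite cg.
  case: (Pred x cx nx) => y [cy /and4P[Sy _ ny /eqP ty]].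
  have gy : y.1 = g.
    apply/eqP; apply/negPn/negP => nyg.
    have wy : inc w y.1 by rewrite hw ty inc_head.
    have ny' : col y.1 != col x.1 by rewrite eq_sym.
    have := pr y.1 g (proj1 (andP Sy)) gF nyg (share_inc wy wg).
    by rewrite (ab3 ab (proj2 (andP Sy)) (proj2 (andP Sg)) (proj2 (andP Sx)) ny' ng) eqxx.
  by rewrite -gy; apply: inW.
pose swap c := if c == a then b else if c == b then a else c.
pose col' f := if f \in W then swap (col f) else col f.
have ba : (b == a) = false by rewrite eq_sym (negbTE ab).
have abf : (a == b) = false by rewrite (negbTE ab).
have swapK c : swap (swap c) = c.
  rewrite /swap; case: (eqVneq c a) => [->|ca]; first by rewrite !(eqxx, ba, abf).
  case: (eqVneq c b) => [->|cb]; first by rewrite !(eqxx, ba, abf).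
  by rewrite (negbTE ca) (negbTE cb).
have swapa c : swap c = a -> c = b.
  rewrite /swap; case: (eqVneq c a) => [->|ca]; first by move=> h; move: ba; rewrite h eqxx.
  by case: (eqVneq c b) => // _ h; move: ca; rewrite h eqxx.
have swapab c : (c == a) || (c == b) -> (swap c == a) || (swap c == b).
  by rewrite /swap; case/orP=> /eqP->; rewrite !(eqxx, ba, abf) ?orbT.
have e0W : e0 \in W by apply: (inW s0); exact: connect0.
have mixed f g : f \in W -> g \in F -> g \notin W -> f \in F -> f != g -> share f g -> swap (col f) != col g.
  move=> fW gF gW fF nfg sh; apply/negP => /eqP h.
  case: (Wdart f fW) => x [cx xf].
  have Sf : inS f by rewrite -xf; apply: RS.
  have Sg : inS g by rewrite /inS gF -h swapab //; case/andP: Sf.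
  have ng : col g != col x.1 by rewrite xf eq_sym; apply: pr.
  by move: gW; rewrite (Clos x g cx gF Sg ng) // xf.
exists col'; split.
- move=> f g fF gF nfg sh; rewrite /col'.
  case fW: (f \in W); case gW: (g \in W).
  + apply: contra (pr f g fF gF nfg sh) => /eqP h; apply/eqP.
    by rewrite -[col f]swapK h swapK.
  + by apply: mixed => //; rewrite gW.
  + by rewrite eq_sym; apply: mixed => //; [rewrite fW | rewrite eq_sym | apply: share_sym].
  + exact: pr.
- move=> f fF uf; rewrite /col'; case fW: (f \in W); last exact: mu.
  by move: (WnoU f fW); rewrite uf.
- move=> f fF vf; rewrite /col'; case fW: (f \in W).
    by apply/eqP => /swapa h; move: (mv f fF vf); rewrite h eqxx.
  apply/eqP => cf; have ef : e0 = f.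
    apply/eqP; apply/negPn/negP => nef.
    by move: (pr e0 f e0F fF nef (share_inc ve0 vf)); rewrite ce0 cf eqxx.
  by move: fW; rewrite -ef e0W.
Qed.

Lemma konig k (F : {set E}) : 0 < k -> (forall v, deg F v <= k) ->
  exists col : E -> 'I_k, pcolor src tgt F col.
Proof.
move=> k0; have [n] := ubnP #|F|; elim: n F => // n IH F; rewrite ltnS => Fn dF.
case: (set_0Vmem F) => [->|[e eF]].
  by exists (fun _ => Ordinal k0) => f g; rewrite inE.
set F' := F :\ e.
have [col pc] : exists col : E -> 'I_k, pcolor src tgt F' col.
  apply: IH; first by move: Fn; rewrite (cardsD1 e F) eF.
  move=> w; apply: leq_trans (dF w); apply: subset_leq_card; apply/subsetP => f.
  by rewrite !inE => /andP[/andP[_ ->] ->].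
have ue : inc (src e) e by rewrite /incident eqxx.
have ve : inc (tgt e) e by rewrite /incident eqxx orbT.
have [a ma] := missing col (leq_trans (deg_D1 eF ue) (dF _)).
have [b mb] := missing col (leq_trans (deg_D1 eF ve) (dF _)).
have [col2 [c [pc2 mu mv]]] : exists col2 : E -> 'I_k, exists c, [/\ pcolor src tgt F' col2,
     (forall f, f \in F' -> inc (src e) f -> col2 f != c) &
     (forall f, f \in F' -> inc (tgt e) f -> col2 f != c)].
  case: (eqVneq a b) => [ab | ab]; first by exists col, a; split => //; rewrite ab.
  have [col2 [? ? ?]] := kempe pc ab (Hside e) ma mb.
  by exists col2, a.
exists (fun f => if f == e then c else col2 f) => f g fF gF nfg sh.
have mis h : h \in F -> h != e -> share e h -> col2 h != c.
  move=> hF he /shareP[w [we wh]]; have hF' : h \in F' by rewrite !inE he.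
  by move: we wh; rewrite {1}/incident => /orP[]/eqP <- wh; [apply: mu | apply: mv].
case: (eqVneq f e) => [fe|fe]; case: (eqVneq g e) => [ge|ge].
- by move: nfg; rewrite fe ge eqxx.
- by rewrite eq_sym; apply: mis => //; rewrite -fe.
- by apply: mis => //; rewrite -ge; apply: share_sym.
- by apply: (pc2 f g) => //; rewrite !inE ?fe ?ge.
Qed.
End Kempe.

Section Main.
Variables (V E : finType) (src tgt : E -> V).
Local Notation inc := (incident src tgt).
Local Notation deg := (deg_in src tgt).

Lemma nu_attained k : 0 < k -> exists F : {set E}, k_colorable src tgt k F /\ nu src tgt k = #|F|.
Proof.
move=> k0; have c0 : k_colorable src tgt k set0.
  by apply: (@pcolor_col _ _ _ _ _ _ (fun _ => Ordinal k0)) => e f; rewrite inE.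
exists [arg max_(F > set0 | k_colorable src tgt k F) #|F|]; split; last exact: bigmax_eq_arg.
by case: arg_maxnP.
Qed.

Lemma nu_ge k (F : {set E}) : k_colorable src tgt k F -> #|F| <= nu src tgt k.
Proof. move=> h; exact: (@leq_bigmax_cond _ (k_colorable src tgt k) (fun F => #|F|) F h). Qed.

Definition Sv (A : {set E}) v := [set f in A | inc v f].

Lemma SvU A B v : Sv (A :|: B) v = Sv A v :|: Sv B v.
Proof. by apply/setP => f; rewrite !inE; case: (f \in A); case: (f \in B); case: (inc v f). Qed.
Lemma SvI A B v : Sv (A :&: B) v = Sv A v :&: Sv B v.
Proof. by apply/setP => f; rewrite !inE; case: (f \in A); case: (f \in B); case: (inc v f). Qed.
Lemma SvD A B v : Sv (A :\: B) v = Sv A v :\: Sv B v.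
Proof. by apply/setP => f; rewrite !inE; case: (f \in A); case: (f \in B); case: (inc v f). Qed.

Lemma degU A B v : deg (A :|: B) v <= deg A v + deg B v.
Proof. rewrite /deg_in -!/(Sv _ v) SvU -cardsUI; lia. Qed.

Lemma degJ F1 F2 v : deg ((F1 :|: F2) :\: (F1 :&: F2)) v + 2 * deg (F1 :&: F2) v
   = deg F1 v + deg F2 v.
Proof.
rewrite /deg_in -!/(Sv _ v) SvD SvU SvI cardsD.
have := cardsUI (Sv F1 v) (Sv F2 v).
have : (Sv F1 v :|: Sv F2 v) :&: (Sv F1 v :&: Sv F2 v) = Sv F1 v :&: Sv F2 v.
  by apply/setIidPr; apply/subsetP => f; rewrite !inE => /andP[-> _].
move=> ->; have : Sv F1 v :&: Sv F2 v \subset Sv F1 v :|: Sv F2 v.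
  by apply/subsetP => f; rewrite !inE => /andP[-> _].
move/subset_leq_card; lia.
Qed.


Lemma split_lemma (side : V -> bool) (Hs : forall e, side (src e) != side (tgt e))
  (J : {set E}) (c : V -> nat) : (forall v, deg J v <= 2 * c v) ->
  exists J1 : {set E}, J1 \subset J /\ forall v, deg J1 v <= c v /\ deg (J :\: J1) v <= c v.
Proof.
move=> dJ.
pose N := #|E|.
pose idx x f := index f (enum (Sv J x)).
pose slot x f : 'I_N.+1 := inord (idx x f %/ 2).
pose src' f := (src f, slot (src f) f).
pose tgt' f := (tgt f, slot (tgt f) f).
pose side' (p : V * 'I_N.+1) := side p.1.
have Hs' e : side' (src' e) != side' (tgt' e) by exact: Hs.
have aux_inc p f : incident src' tgt' p f -> inc p.1 f /\ slot p.1 f = p.2.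
  case: p => x s; rewrite /incident /src' /tgt' => /orP[]/eqP[<- <-]; split => //=; by rewrite eqxx ?orbT.
have inc_aux x f : inc x f -> incident src' tgt' (x, slot x f) f.
  by rewrite /incident => /orP[]/eqP <-; rewrite /src' /tgt' eqxx ?orbT.
have idx_lt x f : f \in J -> inc x f -> idx x f < deg J x.
  move=> fJ xf; rewrite /deg_in cardE -/(Sv J x) index_mem mem_enum inE fJ xf //.
have slotE x f : f \in J -> inc x f -> nat_of_ord (slot x f) = idx x f %/ 2.
  move=> fJ xf; rewrite /slot inordK //; have := idx_lt x f fJ xf.
  have : deg J x <= N by apply: subset_leq_card; apply: subset_predT.
  lia.
have idx_inj x f g : f \in J -> inc x f -> g \in J -> inc x g -> idx x f = idx x g -> f = g.
  move=> fJ xf gJ xg h.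
  have mf : f \in enum (Sv J x) by rewrite mem_enum inE fJ xf.
  have mg : g \in enum (Sv J x) by rewrite mem_enum inE gJ xg.
  by rewrite -(nth_index f mf) -(nth_index f mg) -/(idx x f) -/(idx x g) h.
have d2 p : deg_in src' tgt' J p <= 2.
  apply: (@card_inj_bound _ _ (fun f => odd (idx p.1 f))) => [f g|f _]; last by case: odd.
  rewrite !inE => /andP[fJ /aux_inc[xf sf]] /andP[gJ /aux_inc[xg sg]] ho.
  apply: (idx_inj p.1) => //.
  have e1 := slotE _ _ fJ xf; have e2 := slotE _ _ gJ xg; rewrite sf in e1; rewrite sg in e2.
  have := divn_eq (idx p.1 f) 2; have := divn_eq (idx p.1 g) 2; rewrite !modn2 ho.
  lia.
have [col2 pc2] := konig Hs' (isT : 0 < 2) d2.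
have diff x f g : f \in J -> inc x f -> g \in J -> inc x g -> slot x f = slot x g -> f != g ->
    col2 f != col2 g.
  move=> fJ xf gJ xg sfg nfg; apply: pc2 => //.
  by apply: (share_inc (inc_aux x f xf)); rewrite sfg; apply: inc_aux.
have bound (J' : {set E}) v : J' \subset J -> {in J' &, forall f g, col2 f = col2 g} -> deg J' v <= c v.
  move=> sJ cJ; rewrite /deg_in.
  apply: (@card_inj_bound _ _ (fun f => idx v f %/ 2)) => [f g|f]; rewrite !inE.
    move=> /andP[fJ' vf] /andP[gJ' vg] h.
    have fJ := subsetP sJ f fJ'; have gJ := subsetP sJ g gJ'.
    apply/eqP; apply/negPn/negP => nfg.
    have sfg : slot v f = slot v g by apply: val_inj; rewrite /= !slotE.
    by move: (diff v f g fJ vf gJ vg sfg nfg); rewrite (cJ f g fJ' gJ') eqxx.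
  move=> /andP[fJ' vf]; have fJ := subsetP sJ f fJ'.
  have := idx_lt v f fJ vf; have := dJ v; lia.
exists [set f in J | col2 f == ord0]; split.
  by apply/subsetP => f; rewrite inE => /andP[].
move=> v; split; apply: bound.
- by apply/subsetP => f; rewrite inE => /andP[].
- by move=> f g; rewrite !inE => /andP[_ /eqP->] /andP[_ /eqP->].
- by apply/subsetP => f; rewrite inE => /andP[].
- move=> f g; rewrite !inE => /andP[hf fJ] /andP[hg gJ].
  move: hf hg; rewrite fJ gJ /= => hf hg.
  apply: val_inj; move: hf hg; rewrite -!val_eqE /=.
  have := ltn_ord (col2 f); have := ltn_ord (col2 g); lia.
Qed.

End Main.

Theorem theorem14 (V E : finType) (src tgt : E -> V) (k : nat) :
  2 <= k ->
  loopless src tgt ->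
  bipartite src tgt ->
  at_most_one_cycle src tgt ->
  nu src tgt k.-1 + nu src tgt k.+1 <= 2 * nu src tgt k.
Proof.
move=> k2 _ [side Hs] _.
have [F1 [c1 ->]] := @nu_attained _ _ src tgt k.-1 (ltac:(lia)).
have [F2 [c2 ->]] := @nu_attained _ _ src tgt k.+1 (ltac:(lia)).
have d1 := colorable_deg c1; have d2 := colorable_deg c2.
set I := F1 :&: F2; set J := (F1 :|: F2) :\: I.
have dJ v : deg_in src tgt J v + 2 * deg_in src tgt I v = deg_in src tgt F1 v + deg_in src tgt F2 v := degJ src tgt F1 F2 v.
have dI v : deg_in src tgt I v <= k by have := dJ v; have := d1 v; have := d2 v; lia.
have [J1 [sJ dJ1]] := @split_lemma _ _ src tgt side Hs J (fun v => k - deg_in src tgt I v)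
  (ltac:(move=> v; have := dJ v; have := d1 v; have := d2 v; lia)).
have colH (H : {set E}) : (forall v, deg_in src tgt H v <= k) -> k_colorable src tgt k H.
  move=> dH; have [col pc] := konig Hs (ltac:(lia) : 0 < k) dH; exact: pcolor_col pc.
have n1 : #|I :|: J1| <= nu src tgt k.
  apply/nu_ge/colH => v; have := degU src tgt I J1 v; have := dI v; have := proj1 (dJ1 v); lia.
have n2 : #|I :|: (J :\: J1)| <= nu src tgt k.
  apply/nu_ge/colH => v; have := degU src tgt I (J :\: J1) v; have := dI v; have := proj2 (dJ1 v); lia.
have disj (A : {set E}) : A \subset J -> #|I :|: A| = #|I| + #|A|.
  move=> sA; have := cardsUI I A; suff -> : I :&: A = set0 by rewrite cards0 addn0.
  apply/setP => f; rewrite inE [in RHS]inE; apply/negbTE/negP => /andP[fI fA].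
  by move: (subsetP sA f fA); rewrite inE fI.
rewrite disj // in n1; rewrite disj ?subsetDl // in n2.
rewrite cardsDS // in n2.
have := subset_leq_card sJ.
have : #|J| = #|F1 :|: F2| - #|I|.
  rewrite cardsDS //; apply/subsetP => f; rewrite !inE => /andP[-> _] //.
have := cardsUI F1 F2; have : #|I| <= #|F1 :|: F2|.
  apply: subset_leq_card; apply/subsetP => f; rewrite !inE => /andP[-> _] //.
rewrite -/I; lia.
Qed.
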